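(* Let $\mathbf P=UV^\top$ be an ergodic transition matrix on $\{1,\dots,p\}$ with stationary distribution $\pi$, where $U,V\in\mathbb R^{p\times r}$ are entrywise nonnegative with $U\mathbf 1_r=\mathbf 1_p$, $V^\top\mathbf 1_p=\mathbf 1_r$. Suppose there are constants $c_1,C_1,c_2>0$ with $c_1p^{-1}\le\pi_j\le C_1p^{-1}$ for all $j$, $\lambda_{\min}(U^\top[\mathrm{diag}(\pi)]^2U)\ge c_2p^{-1}r^{-1}$ and $\lambda_{\min}(V^\top[\mathrm{diag}(\pi)]^{-1}V)\ge c_2r$. Let $\mathbf Q=\mathrm{diag}(\pi)\mathbf P[\mathrm{diag}(\pi)]^{-1/2}$ have compact singular value decomposition $\mathbf Q=\mathbf G\Sigma\mathbf H^\top$ with $\mathbf G,\mathbf H\in\mathbb R^{p\times r}$ having orthonormal columns and $\Sigma\in\mathbb R^{r\times r}$ diagonal positive. Then for every $j=1,\dots,p$, $$\|\mathbf e_j^\top\mathbf G\|_2\le c_2^{-1/2}\pi_j\sqrt{pr},\qquad \|\mathbf e_j^\top\mathbf H\|_2\le C_1c_2^{-3/2}\sqrt{\pi_jr}.$$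
   Context: $\mathbf e_j$ denotes the $j$-th standard basis vector of $\mathbb R^p$. *)

(* Defs.v *)
From HB Require Import structures.
From mathcomp Require Import all_boot all_order all_algebra.
From mathcomp Require Import reals.
Set Implicit Arguments. Unset Strict Implicit. Unset Printing Implicit Defensive.
Import Order.TTheory GRing.Theory Num.Theory.
Local Open Scope ring_scope.

Section Defs.
Variable R : realType.

Definition irreducible (p : nat) (P : 'M[R]_p) : Prop :=
  forall i j : 'I_p, exists n : nat, 0 < (P ^+ n) i j.

(* aperiodic: every state has period 1, i.e. the gcd of the return times
   {n >= 1 : P^n(i,i) > 0} is 1 (no d >= 2 divides all return times) *)
Definition aperiodic (p : nat) (P : 'M[R]_p) : Prop :=
  forall i : 'I_p, forall d : nat, (1 < d)%N ->
    exists n : nat, (0 < n)%N /\ 0 < (P ^+ n) i i /\ ~~ (d %| n)%N.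

Definition ergodic (p : nat) (P : 'M[R]_p) : Prop := irreducible P /\ aperiodic P.

Definition transition_matrix (p : nat) (P : 'M[R]_p) : Prop :=
  (forall i j, 0 <= P i j) /\ (forall i, \sum_j P i j = 1).

Definition stationary_distribution (p : nat) (P : 'M[R]_p) (pi : 'rV[R]_p) : Prop :=
  (forall j, 0 <= pi 0 j) /\ \sum_j pi 0 j = 1 /\ pi *m P = pi.

(* lambda_min(M) >= c: every eigenvalue of M is >= c
   (used only for real symmetric M, whose spectrum is real) *)
Definition lambda_min_ge (n : nat) (M : 'M[R]_n) (c : R) : Prop :=
  forall a : R, eigenvalue M a -> c <= a.

Definition row_norm2 (m n : nat) (A : 'M[R]_(m, n)) (j : 'I_m) : R :=
  Num.sqrt (\sum_k A j k ^+ 2).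

End Defs.

(* Main.v *)
Require Import Defs.
From HB Require Import structures.
From mathcomp Require Import all_boot all_order all_algebra.
From mathcomp Require Import reals ring lra.
From mathcomp Require Import classical_sets topology normedtype derive.
Import Order.TTheory GRing.Theory Num.Theory.
Import numFieldTopology.Exports numFieldNormedType.Exports.
Local Open Scope ring_scope.

Section Analysis.
Local Open Scope classical_set_scope.
Lemma cont_sum (R : realType) (T : topologicalType) n (F : 'I_n -> T -> R) :
  (forall i, continuous (F i)) -> continuous (fun x => \sum_i F i x).
Proof.
elim: n F => [|n IH] F cF.
  have -> : (fun x => \sum_(i < 0) F i x) = fun _ => 0.
    by apply: boolp.funext => x; rewrite big_ord0.
  exact: cst_continuous.
have -> : (fun x => \sum_(i < n.+1) F i x) =
  (fun x => \sum_(i < n) F (widen_ord (leqnSn n) i) x + F ord_max x).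
  by apply: boolp.funext => x; rewrite big_ord_recr.
move=> x; apply: (@continuousD _ R^o).
  exact: (IH (fun i => F (widen_ord (leqnSn n) i))).
exact: cF.
Qed.

Lemma cont_qf (R : realType) n (M : 'M[R]_n) :
  continuous (fun x : 'rV[R]_n => \sum_i \sum_j x 0 i * M i j * x 0 j).
Proof.
apply: cont_sum => i; apply: cont_sum => j x.
apply: (@continuousM R _ (fun x : 'rV[R]_n => x 0 i * M i j) (fun x => x 0 j)); last exact: coord_continuous.
apply: (@continuousM R _ (fun x : 'rV[R]_n => x 0 i) (fun x => M i j)); first exact: coord_continuous.
exact: cst_continuous.
Qed.

Lemma cont_nn (R : realType) n :
  continuous (fun x : 'rV[R]_n => \sum_i x 0 i ^+ 2).
Proof.
apply: cont_sum => i x; rewrite /GRing.exp /=.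
apply: (@continuousM R _ (fun x : 'rV[R]_n => x 0 i) (fun x => x 0 i)); exact: coord_continuous.
Qed.

Lemma exists_min_sphere (R : realType) n (f : 'rV[R]_n -> R) : (0 < n)%N ->
  continuous f -> exists2 x0 : 'rV[R]_n, (\sum_i x0 0 i ^+ 2 = 1) &
  forall x : 'rV[R]_n, \sum_i x 0 i ^+ 2 = 1 -> f x0 <= f x.
Proof.
move=> n0 cf.
pose S := [set x : 'rV[R]_n | \sum_i x 0 i ^+ 2 = 1].
have S0 : S !=set0.
  exists (delta_mx 0 (Ordinal n0)); rewrite /S /=.
  rewrite (bigD1 (Ordinal n0)) //= big1 ?addr0; first by rewrite mxE !eqxx expr1n.
  by move=> i /negPf hi; rewrite mxE hi andbF expr0n.
have cS : compact S.
  pose B := [set v : 'rV[R]_n | forall i, `[(-1:R), 1]%classic (v ord0 i)].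
  have cB : compact B.
    apply: (@rV_compact _ n (fun=> `[(-1:R), 1]%classic)) => i.
    exact: segment_compact.
  have clS : closed S.
    have := @preimage_closed _ _ (fun x : 'rV[R]_n => \sum_i x 0 i ^+ 2) [set 1].
    move=> /(_ (fun x _ => @cont_nn R n x)) /(_ (@closed_eq R 1)).
    by move=> h; exact: h.
  apply: (subclosed_compact clS cB).
  move=> v /= Sv i; rewrite /= in_itv /= -ler_norml.
    have : v 0 i ^+ 2 <= 1.
      rewrite -Sv (bigD1 i) //= lerDl; apply: sumr_ge0 => k _; exact: sqr_ge0.
    rewrite -real_normK ?num_real // => h.
    have := normr_ge0 (v 0 i); nra.
have [x0 Sx0 hx0] := compact_EVT_min S0 cS (continuous_subspaceT cf).
exists x0.
  by move: Sx0; rewrite inE.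
move=> y Sy; apply: hx0; rewrite inE; exact: Sy.
Qed.

End Analysis.

Set Implicit Arguments. Unset Strict Implicit.

Section BF.
Variable R : realType.

Definition bf n (M : 'M[R]_n) (x y : 'rV[R]_n) : R := (x *m M *m y^T) 0 0.

Lemma bfDl n (M : 'M[R]_n) x y z : bf M (x + y) z = bf M x z + bf M y z.
Proof. by rewrite /bf !mulmxDl mxE. Qed.
Lemma bfZl n (M : 'M[R]_n) a x z : bf M (a *: x) z = a * bf M x z.
Proof. by rewrite /bf -!scalemxAl mxE. Qed.
Lemma bfDr n (M : 'M[R]_n) x y z : bf M z (x + y) = bf M z x + bf M z y.
Proof.
rewrite /bf; have -> : (x + y)^T = x^T + y^T by apply/matrixP => i j; rewrite !mxE.
by rewrite /bf mulmxDr mxE.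
Qed.
Lemma bfZr n (M : 'M[R]_n) a x z : bf M z (a *: x) = a * bf M z x.
Proof.
rewrite /bf; have -> : (a *: x)^T = a *: x^T by apply/matrixP => i j; rewrite !mxE.
by rewrite /bf -scalemxAr mxE.
Qed.
Lemma bf_sym n (M : 'M[R]_n) x y : M^T = M -> bf M x y = bf M y x.
Proof.
move=> hM; rewrite /bf; transitivity ((x *m M *m y^T)^T 0 0); first by rewrite [RHS]mxE.
by rewrite !trmx_mul trmxK hM mulmxA.
Qed.
Lemma bf1_sym n (x y : 'rV[R]_n) : bf 1%:M x y = bf 1%:M y x.
Proof. by apply: bf_sym; rewrite tr_scalar_mx. Qed.

Lemma bfE n (M : 'M[R]_n) x : bf M x x = \sum_i \sum_j x 0 i * M i j * x 0 j.
Proof.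
rewrite /bf mxE [RHS]exchange_big /=; apply: eq_bigr => j _.
rewrite !mxE mulr_suml; apply: eq_bigr => i _; by [].
Qed.

Lemma nnE n (x : 'rV[R]_n) : bf 1%:M x x = \sum_i x 0 i ^+ 2.
Proof.
rewrite /bf mulmx1 mxE; apply: eq_bigr => i _; by rewrite mxE expr2.
Qed.

Lemma nn_ge0 n (x : 'rV[R]_n) : 0 <= bf 1%:M x x.
Proof. rewrite nnE; apply: sumr_ge0 => i _; exact: sqr_ge0. Qed.

Lemma nn_eq0 n (x : 'rV[R]_n) : bf 1%:M x x = 0 -> x = 0.
Proof.
rewrite nnE => /psumr_eq0P h; apply/rowP => i; rewrite mxE.
by apply/eqP; rewrite -sqrf_eq0; apply/eqP; apply: h => // k _; exact: sqr_ge0.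
Qed.

Lemma bf0l n (M : 'M[R]_n) x : bf M 0 x = 0.
Proof. by rewrite /bf !mul0mx mxE. Qed.

Lemma bf1M n (M : 'M[R]_n) x y : bf 1%:M (x *m M) y = bf M x y.
Proof. by rewrite /bf mulmx1. Qed.

Lemma rayleigh n (M : 'M[R]_n) c : M^T = M -> lambda_min_ge M c ->
  forall x, c * bf 1%:M x x <= bf M x x.
Proof.
move=> hM hl x.
case: (posnP n) => [n0|n0].
  by subst n; rewrite (thinmx0 x) !bf0l mulr0.
pose f := fun x : 'rV[R]_n => bf M x x.
have cf : continuous f.
  have -> : f = (fun x : 'rV[R]_n => \sum_i \sum_j x 0 i * M i j * x 0 j).
    by apply: boolp.funext => y; rewrite /f bfE.
  exact: cont_qf.
have [x0 Sx0 hx0] := @exists_min_sphere R n f n0 cf.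
rewrite -nnE in Sx0.
pose m := f x0.
have C1 : forall y, m * bf 1%:M y y <= f y.
  move=> y; have [->|yn0] := eqVneq y 0; first by rewrite /f !bf0l mulr0.
  have ny : 0 < bf 1%:M y y.
    rewrite lt_def nn_ge0 andbT; apply/eqP => /nn_eq0 h; by rewrite h eqxx in yn0.
  pose s := Num.sqrt (bf 1%:M y y).
  have s0 : 0 < s by rewrite sqrtr_gt0.
  have ss : s * s = bf 1%:M y y by rewrite -expr2 sqr_sqrtr // ltW.
  have ks : s^-1 * s = 1 by rewrite mulVf // gt_eqF.
  have h := hx0 (s^-1 *: y).
  rewrite -nnE bfZl bfZr -ss in h.
  have /h : s^-1 * (s^-1 * (s * s)) = 1 by field; rewrite gt_eqF.
  rewrite /f bfZl bfZr -/(f y) => {}h.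
  rewrite -ss.
  have -> : f y = (s^-1 * (s^-1 * f y)) * (s * s) by field; rewrite gt_eqF.
  by apply: ler_wpM2r => //; rewrite mulr_ge0 // ltW.
have fm : bf M x0 x0 = m by [].
have C2 : forall y, bf M y x0 = m * bf 1%:M y x0.
  move=> y.
  pose a := f y - m * bf 1%:M y y.
  pose b := bf M y x0 - m * bf 1%:M y x0.
  have a0 : 0 <= a by rewrite subr_ge0 C1.
  have ht : forall t, 0 <= 2 * t * b + t ^+ 2 * a.
    move=> t; have := C1 (x0 + t *: y).
    rewrite /f !(bfDl, bfDr, bfZl, bfZr) (bf_sym x0 y hM) (bf1_sym x0 y) Sx0 fm.
    rewrite /a /b /f => h; nra.
  have b0 : b = 0.
    pose u := (a + 1)^-1.
    have a1 : 0 < a + 1 by lra.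
    have u0 : 0 < u by rewrite invr_gt0.
    have ua : u * (a + 1) = 1 by rewrite /u mulVf // gt_eqF.
    have := ht (- b * u).
    move=> h.
    have hb : b ^+ 2 * u * (1 + u) <= 0 by nra.
    have : 0 < u * (1 + u) by nra.
    move=> h2; nra.
  by move: b0; rewrite /b; lra.
pose w := x0 *m M + (- m) *: x0.
have ww : bf 1%:M w w = 0.
  have e1 : bf 1%:M w w = bf M x0 w - m * bf 1%:M x0 w.
    by rewrite {1}/w bfDl bfZl bf1M mulNr.
  by rewrite e1 (bf_sym x0 w hM) C2 bf1_sym subrr.
have wx : x0 *m M = m *: x0.
  by move/nn_eq0: ww => /eqP; rewrite /w addr_eq0 scaleNr opprK => /eqP.
have ev : eigenvalue M m.
  apply/eigenvalueP; exists x0 => //.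
  apply/eqP => x00; move: Sx0; rewrite x00 bf0l => /eqP; by rewrite eq_sym oner_eq0.
have cm := hl m ev.
have := C1 x; have := nn_ge0 x; rewrite /f => h1 h2; nra.
Qed.
Lemma rowbound n k (M : 'M[R]_n) (A : 'M[R]_(n, k)) c (u : 'rV[R]_n) :
  0 < c -> (forall x, c * bf 1%:M x x <= bf M x x) ->
  A^T *m M *m A = 1%:M -> c * bf 1%:M (u *m A) (u *m A) <= bf 1%:M u u.
Proof.
move=> c0 hq hA.
pose x := u *m A *m A^T.
have e1 : bf M x x = bf 1%:M (u *m A) (u *m A).
  rewrite /bf; have -> : x *m M *m x^T = (u *m A) *m (A^T *m M *m A) *m (u *m A)^T.
    by rewrite /x !trmx_mul !trmxK !mulmxA.
  by rewrite hA mulmx1.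
have e2 : bf 1%:M u x = bf 1%:M (u *m A) (u *m A).
  by rewrite /bf !mulmx1 /x trmx_mul trmxK mulmxA.
have h0 := nn_ge0 (u + (-c) *: x).
rewrite !(bfDl, bfDr, bfZl, bfZr) (bf1_sym x u) e2 in h0.
have := hq x; rewrite e1 => h1.
nra.
Qed.

End BF.

Section Aux.
Variable R : realType.

Lemma bf_delta n (M : 'M[R]_n) k : bf M (delta_mx 0 k) (delta_mx 0 k) = M k k.
Proof. by rewrite /bf -rowE trmx_delta -colE !mxE. Qed.

Lemma sumsq_le n (x : 'I_n -> R) : (forall k, 0 <= x k) ->
  \sum_k x k ^+ 2 <= (\sum_k x k) ^+ 2.
Proof.
move=> x0; rewrite [X in _ <= X]expr2 mulr_suml; apply: ler_sum => k _.
rewrite expr2; apply: ler_wpM2l => //.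
by rewrite (bigD1 k) //= lerDl; apply: sumr_ge0.
Qed.

Lemma sqrt_le_sq (a b : R) : 0 <= b -> a <= b ^+ 2 -> Num.sqrt a <= b.
Proof.
move=> b0 h; apply: (le_trans (y := Num.sqrt (b ^+ 2))).
  by rewrite ler_sqrt // sqr_ge0.
by rewrite sqrtr_sqr ger0_norm.
Qed.

Lemma nnZ n a (x : 'rV[R]_n) : bf 1%:M (a *: x) (a *: x) = a ^+ 2 * bf 1%:M x x.
Proof. by rewrite bfZl bfZr mulrA expr2. Qed.

Lemma row_diag_mul p k (d : 'rV[R]_p) (X : 'M[R]_(p, k)) j :
  row j (diag_mx d *m X) = d 0 j *: row j X.
Proof. by rewrite mul_diag_mx; apply/rowP => i; rewrite !mxE. Qed.

Lemma row_norm2E m n (X : 'M[R]_(m, n)) j :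
  row_norm2 X j = Num.sqrt (bf 1%:M (row j X) (row j X)).
Proof. by rewrite /row_norm2 nnE; congr Num.sqrt; apply: eq_bigr => k _; rewrite mxE. Qed.

End Aux.

Theorem mainTheorem7 (R : realType) (p r : nat)
  (U V : 'M[R]_(p, r)) (pi : 'rV[R]_p) (c1 C1 c2 : R)
  (G H : 'M[R]_(p, r)) (s : 'rV[R]_r) :
  (forall i k, 0 <= U i k) -> (forall i k, 0 <= V i k) ->
  U *m const_mx 1 = const_mx 1 :> 'cV[R]_p ->
  V^T *m const_mx 1 = const_mx 1 :> 'cV[R]_r ->
  transition_matrix (U *m V^T) ->
  ergodic (U *m V^T) ->
  stationary_distribution (U *m V^T) pi ->
  0 < c1 -> 0 < C1 -> 0 < c2 ->
  (forall j, c1 / p%:R <= pi 0 j /\ pi 0 j <= C1 / p%:R) ->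
  lambda_min_ge (U^T *m (diag_mx pi *m diag_mx pi) *m U) (c2 / (p%:R * r%:R)) ->
  lambda_min_ge (V^T *m diag_mx (\row_j (pi 0 j)^-1) *m V) (c2 * r%:R) ->
  G^T *m G = 1%:M -> H^T *m H = 1%:M -> (forall k, 0 < s 0 k) ->
  diag_mx pi *m (U *m V^T) *m diag_mx (\row_j (Num.sqrt (pi 0 j))^-1)
    = G *m diag_mx s *m H^T ->
  forall j : 'I_p,
    row_norm2 G j <= (Num.sqrt c2)^-1 * pi 0 j * Num.sqrt (p%:R * r%:R) /\
    row_norm2 H j <= C1 * ((Num.sqrt c2) ^+ 3)^-1 * Num.sqrt (pi 0 j * r%:R).
Proof.
move=> U0 V0 Urow Vcol _ _ [pi0 [pisum stat]] c10 C10 c20 hpi hM1 hN1 GG HH s0 hQ j.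
have p0 : (0 < p)%N by apply: leq_ltn_trans (leq0n _) (ltn_ord j).
have pR : 0 < p%:R :> R by rewrite ltr0n.
have pipos : forall i, 0 < pi 0 i.
  move=> i; have [h _] := hpi i; apply: lt_le_trans h; exact: divr_gt0.
have [r0|r0] := posnP r.
  subst r; rewrite !row_norm2E.
  rewrite !(thinmx0 (row j _)) !bf0l sqrtr0 !mulr0 sqrtr0 !mulr0; by split.
have rR : 0 < r%:R :> R by rewrite ltr0n.
set D := diag_mx pi.
set Dh := diag_mx (\row_j (Num.sqrt (pi 0 j))^-1).
set Di := diag_mx (\row_j (pi 0 j)^-1).
set S := diag_mx s.
pose Si := diag_mx (\row_k (s 0 k)^-1).
have SSi : S *m Si = 1%:M.
  rewrite /S /Si mulmx_diag -diag_const_mx; congr diag_mx; apply/rowP => k.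
  by rewrite !mxE mulfV // gt_eqF.
have DhDh : Dh *m Dh = Di.
  rewrite /Dh /Di mulmx_diag; congr diag_mx; apply/rowP => k.
  by rewrite !mxE -invfM -expr2 sqr_sqrtr // ltW.
pose A := V^T *m Dh *m H *m Si.
have GE : G = D *m U *m A.
  transitivity (G *m S *m (H^T *m H) *m Si).
    by rewrite HH mulmx1 -mulmxA SSi mulmx1.
  by rewrite !mulmxA -hQ /A !mulmxA.
pose B := U^T *m D *m G *m Si.
have trD : D^T = D by rewrite /D tr_diag_mx.
have trDh : Dh^T = Dh by rewrite /Dh tr_diag_mx.
have trDi : Di^T = Di by rewrite /Di tr_diag_mx.
have trS : S^T = S by rewrite /S tr_diag_mx.
have hQT : Dh *m V *m U^T *m D = H *m S *m G^T.
  have h := congr1 trmx hQ; rewrite !trmx_mul !trmxK trD trDh trS in h.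
  by rewrite ?mulmxA in h *; rewrite h.
have HE : H = Dh *m V *m B.
  transitivity (H *m S *m (G^T *m G) *m Si).
    by rewrite GG mulmx1 -mulmxA SSi mulmx1.
  by rewrite !mulmxA -hQT /B ?mulmxA.
pose M1 := U^T *m (D *m D) *m U.
pose N1 := V^T *m Di *m V.
have M1s : M1^T = M1.
  by rewrite /M1 !trmx_mul trmxK trD ?mulmxA.
have N1s : N1^T = N1.
  by rewrite /N1 !trmx_mul trmxK trDi ?mulmxA.
have hA : A^T *m M1 *m A = 1%:M.
  by rewrite -GG {2}GE {1}GE !trmx_mul /M1 trD ?mulmxA.
have hB : B^T *m N1 *m B = 1%:M.
  by rewrite -HH {2}HE {1}HE !trmx_mul /N1 -DhDh trDh ?mulmxA.
have qM1 := rayleigh M1s hM1.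
have qN1 := rayleigh N1s hN1.
have usum : forall i, \sum_k U i k = 1.
  move=> i; have := congr1 (fun M : 'cV[R]_p => M i 0) Urow; rewrite !mxE => <-.
  by apply: eq_bigr => k _; rewrite mxE mulr1.
have Ule1 : forall i k, U i k <= 1.
  move=> i k; rewrite -(usum i) (bigD1 k) //= lerDl; exact: sumr_ge0.
have P0 : 0 < p%:R * r%:R :> R by rewrite mulr_gt0.
have cpos : 0 < c2 / (p%:R * r%:R) by rewrite divr_gt0.
split.
  have rowG : row j G = pi 0 j *: (row j U *m A).
    by rewrite GE row_mul row_diag_mul scalemxAl.
  have nnU : bf 1%:M (row j U) (row j U) <= 1.
    have hs : \sum_k (row j U) 0 k = 1.
      by rewrite -(usum j); apply: eq_bigr => k _; rewrite mxE.
    rewrite nnE; apply: (le_trans (sumsq_le _)).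
      by move=> k; rewrite mxE.
    by rewrite hs expr1n.
  have rb := rowbound (row j U) cpos qM1 hA.
  set X := bf 1%:M (row j U *m A) (row j U *m A) in rb *.
  have hX : X <= (p%:R * r%:R) / c2.
    have -> : X = (c2 / (p%:R * r%:R) * X) * ((p%:R * r%:R) / c2).
      by field; rewrite !gt_eqF.
    rewrite -[leRHS]mul1r; apply: ler_wpM2r.
      by rewrite divr_ge0 // ltW.
    exact: le_trans rb nnU.
  rewrite row_norm2E rowG nnZ -/X; apply: sqrt_le_sq.
    by rewrite !mulr_ge0 ?invr_ge0 ?sqrtr_ge0 // ltW.
  rewrite !exprMn exprVn (sqr_sqrtr (ltW c20)) (sqr_sqrtr (ltW P0)).
  have -> : c2^-1 * pi 0 j ^+ 2 * (p%:R * r%:R) = pi 0 j ^+ 2 * ((p%:R * r%:R) / c2).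
    by field; rewrite gt_eqF.
  by apply: ler_wpM2l => //; exact: sqr_ge0.
have pj := pipos j.
have rowH : row j H = (Num.sqrt (pi 0 j))^-1 *: (row j V *m B).
  by rewrite HE row_mul row_diag_mul mxE scalemxAl.
pose w := pi *m U.
have wE : forall k, w 0 k = \sum_i pi 0 i * U i k.
  by move=> k; rewrite /w mxE.
have M1kk : forall k, M1 k k = \sum_i (pi 0 i * U i k) * (pi 0 i * U i k).
  move=> k; rewrite /M1 /D mulmx_diag mul_mx_diag mxE; apply: eq_bigr => i _.
  by rewrite !mxE; ring.
have wlow : forall k, c2 / (C1 * r%:R) <= w 0 k.
  move=> k.
  have h := qM1 (delta_mx 0 k); rewrite !bf_delta M1kk mxE eqxx mulr1 in h.
  have h2 : \sum_i (pi 0 i * U i k) * (pi 0 i * U i k) <= C1 / p%:R * w 0 k.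
    rewrite wE mulr_sumr; apply: ler_sum => i _.
    have a0 : 0 <= pi 0 i * U i k by rewrite mulr_ge0.
    have a1 : pi 0 i * U i k <= C1 / p%:R.
      have [_ hp] := hpi i; have := Ule1 i k; have := U0 i k; have := pi0 i; nra.
    by apply: ler_wpM2r.
  have h3 := le_trans h h2.
  have -> : w 0 k = (p%:R / C1) * (C1 / p%:R * w 0 k) by field; rewrite !gt_eqF.
  have -> : c2 / (C1 * r%:R) = (p%:R / C1) * (c2 / (p%:R * r%:R)) by field; rewrite !gt_eqF.
  by apply: ler_wpM2l => //; rewrite divr_ge0 // ltW.
have pij : pi 0 j = \sum_k w 0 k * V j k.
  have := congr1 (fun M : 'rV[R]_p => M 0 j) stat; rewrite mulmxA mxE => <-.
  by apply: eq_bigr => k _; rewrite [V^T _ _]mxE.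
have hSV : \sum_k V j k <= pi 0 j * (C1 * r%:R / c2).
  have h : c2 / (C1 * r%:R) * \sum_k V j k <= pi 0 j.
    rewrite pij mulr_sumr; apply: ler_sum => k _; apply: ler_wpM2r => //.
  have -> : \sum_k V j k = (C1 * r%:R / c2) * (c2 / (C1 * r%:R) * \sum_k V j k).
    by field; rewrite !gt_eqF // mulr_gt0.
  rewrite [leRHS]mulrC; apply: ler_wpM2l => //; rewrite !mulr_ge0 ?invr_ge0 // ltW //.
have SV0 : 0 <= \sum_k V j k by apply: sumr_ge0.
have nnV : bf 1%:M (row j V) (row j V) <= (\sum_k V j k) ^+ 2.
  have hs : \sum_k (row j V) 0 k = \sum_k V j k.
    by apply: eq_bigr => k _; rewrite mxE.
  rewrite nnE -hs; apply: (le_trans (sumsq_le _)) => //.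
  by move=> k; rewrite mxE.
have c2r : 0 < c2 * r%:R by rewrite mulr_gt0.
have rb := rowbound (row j V) c2r qN1 hB.
set Y := bf 1%:M (row j V *m B) (row j V *m B) in rb *.
set K := pi 0 j * (C1 * r%:R / c2) in hSV.
have hK : (\sum_k V j k) ^+ 2 <= K ^+ 2 by nra.
have hY : Y <= K ^+ 2 / (c2 * r%:R).
  have -> : Y = (c2 * r%:R * Y) / (c2 * r%:R) by field; rewrite !gt_eqF.
  apply: ler_wpM2r; first by rewrite invr_ge0 ltW.
  exact: le_trans rb (le_trans nnV hK).
rewrite row_norm2E rowH nnZ -/Y; apply: sqrt_le_sq.
  by rewrite !mulr_ge0 ?invr_ge0 ?exprn_ge0 ?sqrtr_ge0 // ltW.
rewrite !exprMn !exprVn (sqr_sqrtr (ltW pj)) (sqr_sqrtr (mulr_ge0 (ltW pj) (ltW rR))).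
rewrite -exprM mulnC exprM (sqr_sqrtr (ltW c20)).
have -> : C1 ^+ 2 * (c2 ^+ 3)^-1 * (pi 0 j * r%:R) = (pi 0 j)^-1 * (K ^+ 2 / (c2 * r%:R)).
  by rewrite /K; field; rewrite !gt_eqF.
by apply: ler_wpM2l => //; rewrite invr_ge0 ltW.
Qed.
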